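(* Let $\mathcal{V}\subseteq\mathbb{R}^D$ be compact, $u\in\mathcal{U}$ fixed, and suppose $f(u,\cdot)$ is continuous and $l$-Lipschitz on $\mathcal{V}$ ($l>0$). Assume $R(u)$ and $S(u)$ are both finite. Let $\zeta=\phi(u)-\max_{v\in S(u)\setminus R(u)}f(u,v)$ (with $\zeta=\infty$ if $S(u)=R(u)$). Let $\epsilon\ge0$ with $\epsilon<\zeta$, let $A\subseteq\mathcal{V}$ be finite, and let $\delta\ge0$ with $\delta<\tfrac12(\zeta-\epsilon)/l$. If $d_H(R(u),A)\le\delta$ and $d_H(A,S(u))\le\delta$, then for each $v'\in R^\epsilon_A(u)$ there is $v\in R(u)$ with $\|v-v'\|\le\delta$.
   Context: Definitions: $\phi(u)=\max_{v\in\mathcal{V}} f(u,v)$, $R(u)=\{v\in\mathcal{V}: f(u,v)=\phi(u)\}$. $S(u)$ is the set of local maximum points of $f(u,\cdot)$: $S(u)=\{v_0\in\mathcal{V}:\exists r>0,\ \forall v\in\mathcal{V},\ \|v_0-v\|\le r\Rightarrow f(u,v_0)\ge f(u,v)\}$ (so $R(u)\subseteq S(u)$). For finite $A\subseteq\mathcal{V}$: $\phi_A(u)=\max_{v\in A}f(u,v)$ and $R^\epsilon_A(u)=\{v\in A:\phi_A(u)-f(u,v)\le\epsilon\}$. For sets $X,Y$, $d_H(X,Y)=\max_{x\in X}\min_{y\in Y}\|x-y\|$. *)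

(* Defs.v *)
From Stdlib Require Import Reals Lra List Classical ClassicalEpsilon.
From Stdlib Require Fin.
Open Scope R_scope.

Definition Vec (D : nat) : Type := Fin.t D -> R.

Fixpoint sqsum (D : nat) : Vec D -> R :=
  match D return Vec D -> R with
  | O => fun _ => 0
  | S n => fun x => (x Fin.F1) ^ 2 + sqsum n (fun i => x (Fin.FS i))
  end.

Definition vnorm {D : nat} (x : Vec D) : R := sqrt (sqsum D x).
Definition vdist {D : nat} (x y : Vec D) : R := vnorm (fun i => x i - y i).

(* Sequential compactness (equivalent to compactness in the metric space R^D) *)
Definition seq_compact {D : nat} (V : Vec D -> Prop) : Prop :=
  forall x : nat -> Vec D, (forall n, V (x n)) ->
    exists (phi : nat -> nat) (l : Vec D),
      (forall n m, (n < m)%nat -> (phi n < phi m)%nat) /\ V l /\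
      forall eps, eps > 0 -> exists N, forall n, (n >= N)%nat ->
        vdist (x (phi n)) l < eps.

Definition continuous_on {D : nat} (V : Vec D -> Prop) (g : Vec D -> R) : Prop :=
  forall v, V v -> forall eps, eps > 0 -> exists d, d > 0 /\
    forall w, V w -> vdist w v < d -> Rabs (g w - g v) < eps.

Definition lipschitz_on {D : nat} (V : Vec D -> Prop) (g : Vec D -> R) (l : R) : Prop :=
  forall v w, V v -> V w -> Rabs (g v - g w) <= l * vdist v w.

Definition finite_set {T : Type} (P : T -> Prop) : Prop :=
  exists s : list T, forall x, P x <-> In x s.

Definition is_max_val {T : Type} (P : T -> Prop) (g : T -> R) (m : R) : Prop :=
  (exists x, P x /\ g x = m) /\ forall x, P x -> g x <= m.
Definition is_min_val {T : Type} (P : T -> Prop) (g : T -> R) (m : R) : Prop :=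
  (exists x, P x /\ g x = m) /\ forall x, P x -> m <= g x.

(* max / min over P; junk value 0 when not attained (e.g. empty P) *)
Definition maxval {T : Type} (P : T -> Prop) (g : T -> R) : R :=
  match excluded_middle_informative (exists m, is_max_val P g m) with
  | left H => proj1_sig (constructive_indefinite_description _ H)
  | right _ => 0
  end.
Definition minval {T : Type} (P : T -> Prop) (g : T -> R) : R :=
  match excluded_middle_informative (exists m, is_min_val P g m) with
  | left H => proj1_sig (constructive_indefinite_description _ H)
  | right _ => 0
  end.

Section Defs.
Context {U : Type} {D : nat} (f : U -> Vec D -> R) (V : Vec D -> Prop).

Definition phi (u : U) : R := maxval V (f u).

Definition Rmaxset (u : U) : Vec D -> Prop := fun v => V v /\ f u v = phi u.

Definition Slocset (u : U) : Vec D -> Prop := fun v0 =>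
  V v0 /\ exists r, r > 0 /\ forall v, V v -> vdist v0 v <= r -> f u v0 >= f u v.

(* zeta = phi(u) - max_{v in S(u)\R(u)} f(u,v);  None encodes +infinity
   (the case S(u) \ R(u) empty) *)
Definition zeta (u : U) : option R :=
  match excluded_middle_informative
          (exists v, Slocset u v /\ ~ Rmaxset u v) with
  | left _ => Some (phi u - maxval (fun v => Slocset u v /\ ~ Rmaxset u v) (f u))
  | right _ => None
  end.

Definition phiA (A : Vec D -> Prop) (u : U) : R := maxval A (f u).
Definition RepsA (A : Vec D -> Prop) (eps : R) (u : U) : Vec D -> Prop :=
  fun v => A v /\ phiA A u - f u v <= eps.
End Defs.

Definition dH {D : nat} (X Y : Vec D -> Prop) : R :=
  maxval X (fun x => minval Y (fun y => vdist x y)).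

Definition lt_ext (x : R) (z : option R) : Prop :=
  match z with None => True | Some z => x < z end.

(* Main.v *)
Require Import Defs.
From Stdlib Require Import Reals Lra Lia ZArith Classical ClassicalEpsilon List.
Open Scope R_scope.

Lemma Rabs_def2b (a b c : R) : Rabs (a - b) <= c -> a <= b + c /\ b - c <= a.
Proof. unfold Rabs; destruct (Rcase_abs (a - b)); intros; split; lra. Qed.

Lemma nat_unbounded (y : R) : exists n : nat, y < INR n.
Proof.
  destruct (archimed y) as [H1 _].
  exists (Z.to_nat (up y)).
  destruct (Z.le_gt_cases 0 (up y)) as [Hz|Hz].
  - rewrite INR_IZR_INZ, Z2Nat.id; auto.
  - apply IZR_lt in Hz. pose proof (pos_INR (Z.to_nat (up y))). lra.
Qed.

Lemma sqsum_opp (D : nat) : forall x y : Vec D, (forall i, y i = - x i) ->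
  sqsum D y = sqsum D x.
Proof.
  induction D as [|n IH]; intros x y H; simpl; auto.
  rewrite (IH (fun i => x (Fin.FS i)) (fun i => y (Fin.FS i))).
  - rewrite H. ring.
  - intro i. apply H.
Qed.

Lemma vdist_sym {D} (x y : Vec D) : vdist x y = vdist y x.
Proof.
  unfold vdist, vnorm. f_equal. apply sqsum_opp. intro i. ring.
Qed.

Lemma maxval_eq {T} (P : T -> Prop) g m : is_max_val P g m -> maxval P g = m.
Proof.
  intro Hm. unfold maxval.
  destruct (excluded_middle_informative _) as [H|H].
  - destruct (constructive_indefinite_description _ H) as [m' Hm']. simpl.
    destruct Hm as [[x [Px gx]] Hx]. destruct Hm' as [[x' [Px' gx']] Hx'].
    specialize (Hx _ Px'). specialize (Hx' _ Px). lra.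
  - exfalso. apply H. eauto.
Qed.

Lemma minval_eq {T} (P : T -> Prop) g m : is_min_val P g m -> minval P g = m.
Proof.
  intro Hm. unfold minval.
  destruct (excluded_middle_informative _) as [H|H].
  - destruct (constructive_indefinite_description _ H) as [m' Hm']. simpl.
    destruct Hm as [[x [Px gx]] Hx]. destruct Hm' as [[x' [Px' gx']] Hx'].
    specialize (Hx _ Px'). specialize (Hx' _ Px). lra.
  - exfalso. apply H. eauto.
Qed.

Lemma list_max {T} (g : T -> R) (s : list T) : forall P : T -> Prop,
  (forall x, P x -> In x s) -> (exists x, P x) -> exists m, is_max_val P g m.
Proof.
  induction s as [|a s IH]; intros P HP [x0 Px0].
  - destruct (HP _ Px0).
  - destruct (classic (exists x, P x /\ x <> a)) as [Hne|Hne].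
    + destruct (IH (fun x => P x /\ x <> a)) as [m' [[y [[Py _] gy]] Hm']].
      * intros x [Px Hxa]. destruct (HP _ Px); [congruence|auto].
      * exact Hne.
      * destruct (classic (P a)) as [Pa|nPa].
        -- exists (Rmax (g a) m'). split.
           ++ unfold Rmax. destruct (Rle_dec (g a) m'); eauto.
           ++ intros x Px. destruct (classic (x = a)) as [->|Hxa].
              ** apply Rmax_l.
              ** eapply Rle_trans; [apply Hm'; auto|apply Rmax_r].
        -- exists m'. split; eauto.
           intros x Px. apply Hm'. split; auto. intros ->. auto.
    + assert (Pa : P a).
      { destruct (classic (x0 = a)) as [<-|H]; auto. exfalso; eauto. }
      exists (g a). split; eauto.
      intros x Px. destruct (classic (x = a)) as [->|H]; [lra|exfalso; eauto].
Qed.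

Lemma list_min {T} (g : T -> R) (s : list T) : forall P : T -> Prop,
  (forall x, P x -> In x s) -> (exists x, P x) -> exists m, is_min_val P g m.
Proof.
  intros P HP Hne. destruct (list_max (fun x => - g x) s P HP Hne) as [m [[x [Px gx]] Hm]].
  exists (- m). split.
  - exists x. split; auto. lra.
  - intros y Py. specialize (Hm y Py). lra.
Qed.

Lemma mono_ge (ph : nat -> nat) : (forall n m, (n < m)%nat -> (ph n < ph m)%nat) ->
  forall n, (n <= ph n)%nat.
Proof.
  intros H n. induction n; [lia|]. specialize (H n (S n) ltac:(lia)). lia.
Qed.

Lemma compact_max {D} (V : Vec D -> Prop) (g : Vec D -> R) (l : R) :
  seq_compact V -> l > 0 -> lipschitz_on V g l -> (exists x, V x) ->
  exists m, is_max_val V g m.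
Proof.
  intros HV Hl Hlip Hne.
  assert (Hb : exists B, forall x, V x -> g x <= B).
  { apply NNPP. intro Hn.
    assert (Hc : forall n : nat, {x | V x /\ g x > INR n}).
    { intro n. apply constructive_indefinite_description.
      apply NNPP. intro H2. apply Hn. exists (INR n). intros x Vx.
      apply Rnot_lt_le. intro H3. apply H2. eauto. }
    destruct (HV (fun n => proj1_sig (Hc n)) (fun n => proj1 (proj2_sig (Hc n))))
      as [ph [L [Hmono [VL Hconv]]]].
    destruct (Hconv 1 ltac:(lra)) as [N HN].
    destruct (nat_unbounded (g L + l)) as [k Hk].
    set (n := Nat.max N k).
    specialize (HN n ltac:(unfold n; lia)).
    pose proof (proj2 (proj2_sig (Hc (ph n)))) as Hg.
    set (xn := proj1_sig (Hc (ph n))) in *.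
    pose proof (Hlip xn L (proj1 (proj2_sig (Hc (ph n)))) VL) as Hli.
    pose proof (mono_ge ph Hmono n) as Hge.
    assert (INR k <= INR (ph n)) by (apply le_INR; unfold n in *; lia).
    assert (l * vdist xn L < l * 1) by (apply Rmult_lt_compat_l; lra).
    apply Rabs_def2b in Hli. destruct Hli. lra. }
  destruct Hb as [B HB].
  set (E := fun y => exists x, V x /\ y = g x).
  destruct (completeness E) as [M [HM1 HM2]].
  { exists B. intros y [x [Vx ->]]. auto. }
  { destruct Hne as [x Vx]. exists (g x). exists x. auto. }
  assert (Hc : forall n : nat, {x | V x /\ g x > M - / INR (S n)}).
  { intro n. apply constructive_indefinite_description.
    apply NNPP. intro H2.
    assert (Hub : is_upper_bound E (M - / INR (S n))).
    { intros y [x [Vx ->]]. apply Rnot_lt_le. intro H3. apply H2. eauto. }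
    specialize (HM2 _ Hub).
    assert (0 < / INR (S n)) by (apply Rinv_0_lt_compat, lt_0_INR; lia). lra. }
  destruct (HV (fun n => proj1_sig (Hc n)) (fun n => proj1 (proj2_sig (Hc n))))
    as [ph [L [Hmono [VL Hconv]]]].
  exists (g L). split; [eauto|].
  intros x Vx.
  assert (gLM : g L <= M) by (apply HM1; exists L; auto).
  assert (HgxM : g x <= M) by (apply HM1; exists x; auto).
  enough (M <= g L) by lra.
  apply Rnot_lt_le. intro Hlt.
  set (e := M - g L).
  assert (He : e > 0) by (unfold e; lra).
  destruct (archimed_cor1 (e/2) ltac:(lra)) as [N1 [HN1 HN1p]].
  destruct (Hconv (e / (2 * l)) ltac:(apply Rdiv_lt_0_compat; lra)) as [N2 HN2].
  set (n := Nat.max N1 N2).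
  specialize (HN2 n ltac:(unfold n; lia)).
  pose proof (proj2 (proj2_sig (Hc (ph n)))) as Hg.
  set (xn := proj1_sig (Hc (ph n))) in *.
  pose proof (Hlip xn L (proj1 (proj2_sig (Hc (ph n)))) VL) as Hli.
  pose proof (mono_ge ph Hmono n) as Hge.
  assert (Hinv : / INR (S (ph n)) <= / INR N1).
  { apply Rinv_le_contravar. apply lt_0_INR; lia. apply le_INR. unfold n in *; lia. }
  assert (Hd : l * vdist xn L < l * (e / (2 * l))) by (apply Rmult_lt_compat_l; lra).
  replace (l * (e / (2 * l))) with (e / 2) in Hd by (field; lra).
  apply Rabs_def2b in Hli. destruct Hli. unfold e in *. lra.
Qed.

Theorem mainTheorem3 (D : nat) (U : Type) (f : U -> Vec D -> R)
  (V : Vec D -> Prop) (u : U) (l : R)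
  (HV : seq_compact V)
  (Hl : l > 0)
  (Hcont : continuous_on V (f u))
  (Hlip : lipschitz_on V (f u) l)
  (HRfin : finite_set (Rmaxset f V u))
  (HSfin : finite_set (Slocset f V u))
  (eps : R) (Heps0 : 0 <= eps) (Heps : lt_ext eps (zeta f V u))
  (A : Vec D -> Prop) (HAV : forall v, A v -> V v) (HAfin : finite_set A)
  (delta : R) (Hdelta0 : 0 <= delta)
  (Hdelta : match zeta f V u with
            | None => True
            | Some z => delta < (1/2) * (z - eps) / l
            end)
  (HdRA : dH (Rmaxset f V u) A <= delta)
  (HdAS : dH A (Slocset f V u) <= delta) :
  forall v', RepsA f A eps u v' ->
    exists v, Rmaxset f V u v /\ vdist v v' <= delta.
Proof.
  intros v' [Av' Hv'].
  destruct (compact_max V (f u) l HV Hl Hlip (ex_intro _ v' (HAV _ Av'))) as [M HM].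
  assert (HphiM : phi f V u = M) by (apply maxval_eq; auto).
  destruct HM as [[r [Vr fr]] HMle].
  assert (Rr : Rmaxset f V u r) by (split; congruence).
  assert (RS : forall v, Rmaxset f V u v -> Slocset f V u v).
  { intros v [Vv fv]. split; auto. exists 1. split; [lra|].
    intros w Vw _. rewrite fv, HphiM. apply Rle_ge, HMle; auto. }
  destruct HRfin as [sR HsR]. destruct HSfin as [sS HsS]. destruct HAfin as [sA HsA].
  assert (Ha : exists a, A a /\ vdist r a <= delta).
  { destruct (list_max (fun x => minval A (fun y => vdist x y)) sR (Rmaxset f V u))
      as [m Hm]; [intros; apply HsR; auto|eauto|].
    unfold dH in HdRA. rewrite (maxval_eq _ _ _ Hm) in HdRA.
    destruct Hm as [_ Hm]. specialize (Hm r Rr).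
    destruct (list_min (fun y => vdist r y) sA A) as [m' Hm']; [intros; apply HsA; auto|eauto|].
    rewrite (minval_eq _ _ _ Hm') in Hm.
    destruct Hm' as [[a [Aa Ha]] _]. exists a. split; auto. lra. }
  destruct Ha as [a [Aa Hra]].
  assert (Hs : exists s, Slocset f V u s /\ vdist v' s <= delta).
  { destruct (list_max (fun x => minval (Slocset f V u) (fun y => vdist x y)) sA A)
      as [m Hm]; [intros; apply HsA; auto|eauto|].
    unfold dH in HdAS. rewrite (maxval_eq _ _ _ Hm) in HdAS.
    destruct Hm as [_ Hm]. specialize (Hm v' Av').
    destruct (list_min (fun y => vdist v' y) sS (Slocset f V u)) as [m' Hm'];
      [intros; apply HsS; auto|eauto|].
    rewrite (minval_eq _ _ _ Hm') in Hm.
    destruct Hm' as [[s [Ss Hs]] _]. exists s. split; auto. lra. }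
  destruct Hs as [s [Ss Hsv]].
  destruct (classic (Rmaxset f V u s)) as [Rs|nRs].
  { exists s. split; auto. rewrite vdist_sym. auto. }
  exfalso.
  unfold zeta in Heps, Hdelta.
  destruct (excluded_middle_informative _) as [Hex|Hex]; [|apply Hex; eauto].
  simpl in Heps.
  destruct (list_max (f u) sS (fun v => Slocset f V u v /\ ~ Rmaxset f V u v)) as [m Hm];
    [intros x [Sx _]; apply HsS; auto|auto|].
  rewrite (maxval_eq _ _ _ Hm) in Heps, Hdelta.
  destruct Hm as [_ Hm]. specialize (Hm s (conj Ss nRs)).
  destruct (list_max (f u) sA A) as [pA HpA]; [intros; apply HsA; auto|eauto|].
  unfold phiA in Hv'. rewrite (maxval_eq _ _ _ HpA) in Hv'.
  destruct HpA as [_ HpA]. specialize (HpA a Aa).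
  rewrite HphiM in Heps, Hdelta.
  pose proof (Hlip r a Vr (HAV _ Aa)) as L1.
  pose proof (Hlip v' s (HAV _ Av') (proj1 Ss)) as L2.
  apply Rabs_def2b in L1. apply Rabs_def2b in L2.
  assert (l * vdist r a <= l * delta) by (apply Rmult_le_compat_l; lra).
  assert (l * vdist v' s <= l * delta) by (apply Rmult_le_compat_l; lra).
  assert (Hd2 : 2 * l * delta < M - m - eps).
  { apply (Rmult_lt_compat_l (2 * l)) in Hdelta; [|lra].
    replace (2 * l * (1 / 2 * (M - m - eps) / l)) with (M - m - eps) in Hdelta by (field; lra).
    lra. }
  destruct L1, L2. lra.
Qed.
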